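(* Let $\Sigma$ be an alphabet and $n\geq 1$. A function $g\colon\mathcal{T}(\Sigma)^n\to\mathcal{T}(\Sigma)$ is WCP if and only if it satisfies the following condition (GCP): for all $a_1,\ldots,a_n\in\Sigma$, all $i\in\{1,\ldots,n\}$ and all $b_i\in\Sigma$, $$\sigma_{a_i}^{b_i}(g(a_1,\ldots,a_n))=\sigma_{a_i}^{b_i}(g(a_1,\ldots,a_{i-1},b_i,a_{i+1},\ldots,a_n)).$$
   Context: Let $\Sigma$ be an alphabet not containing $0,1$. A binary tree over $\Sigma$ is a finite set $t \subseteq \{0,1\}^*\Sigma$ such that for any $ua, vb \in t$ with $ua \neq vb$, $u$ is not a prefix of $v$ and $v$ is not a prefix of $u$; $\mathcal{T}(\Sigma)$ is the set of such trees, $\mathbf 0=\emptyset$, each letter $a$ is identified with $\{a\}$, and $t\star t' = 0.t\cup 1.t'$. Every map $h\colon\Sigma\to\mathcal{T}(\Sigma)$ extends uniquely to an endomorphism of $\langle\mathcal{T}(\Sigma),\star\rangle$, still denoted $h$. For $a\in\Sigma$ and $\tau\in\mathcal{T}(\Sigma)$, the grafting $\sigma_a^\tau$ is the endomorphism with $\sigma_a^\tau(a)=\tau$ and $\sigma_a^\tau(b)=b$ for $b\neq a$. A function $g\colon\mathcal{T}(\Sigma)^n\to\mathcal{T}(\Sigma)$ is WCP if for every idempotent mapping $h\colon\Sigma\to\Sigma$ and all $\vec u,\vec v\in\Sigma^n$, $h(\vec u)=h(\vec v)$ implies $h(g(\vec u))=h(g(\vec v))$, where $h(\langle u_1,\ldots,u_n\rangle)=\langle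 h(u_1),\ldots,h(u_n)\rangle$. *)

(* Defs.v *)
From HB Require Import structures.
From mathcomp Require Import all_boot.
From mathcomp Require Import finmap.
Set Implicit Arguments. Unset Strict Implicit. Unset Printing Implicit Defensive.
Local Open Scope fset_scope.

Section BinTrees.
Variable Sigma : finType.

(* A word of {0,1}^* Sigma : a bit-string (false = 0, true = 1) followed by a letter. *)
Definition word := (seq bool * Sigma)%type.

Definition is_tree (t : {fset word}) : bool :=
  all (fun x : word => all (fun y : word =>
        (x == y) || (~~ prefix x.1 y.1 && ~~ prefix y.1 x.1)) t) t.

Definition tree := {t : {fset word} | is_tree t}.

Definition prefix_tree (u : seq bool) (t : {fset word}) : {fset word} :=
  [fset ((u ++ w.1), w.2) | w in t].

(* The endomorphism of <T(Sigma), *> extending f : Sigma -> T(Sigma),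
   written out explicitly: f(t) = \bigcup_{ua in t} u.f(a). *)
Definition subst (f : Sigma -> {fset word}) (t : {fset word}) : {fset word} :=
  \bigcup_(x <- t) prefix_tree x.1 (f x.2).

Definition letter_set (a : Sigma) : {fset word} := [fset (([::] : seq bool), a)].

Lemma letter_is_tree (a : Sigma) : is_tree (letter_set a).
Proof.
by rewrite /is_tree /letter_set; apply/allP => x /fset1P ->; apply/allP => y /fset1P ->; rewrite eqxx.
Qed.

Definition letter (a : Sigma) : tree := exist _ (letter_set a) (letter_is_tree a).

Definition lmap (h : Sigma -> Sigma) (t : {fset word}) : {fset word} :=
  subst (fun c => letter_set (h c)) t.

Definition graft (a : Sigma) (tau : {fset word}) (t : {fset word}) : {fset word} :=
  subst (fun c => if c == a then tau else letter_set c) t.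

Definition WCP (n : nat) (g : ('I_n -> tree) -> tree) : Prop :=
  forall h : Sigma -> Sigma, (forall x, h (h x) = h x) ->
  forall u v : 'I_n -> Sigma, (forall i, h (u i) = h (v i)) ->
    lmap h (val (g (fun i => letter (u i)))) = lmap h (val (g (fun i => letter (v i)))).

Definition GCP (n : nat) (g : ('I_n -> tree) -> tree) : Prop :=
  forall (a : 'I_n -> Sigma) (i : 'I_n) (b : Sigma),
    graft (a i) (letter_set b) (val (g (fun j => letter (a j)))) =
    graft (a i) (letter_set b)
      (val (g (fun j => letter (if j == i then b else a j)))).

End BinTrees.

(* Main.v *)
Require Import Defs.
From mathcomp Require Import all_boot.
From mathcomp Require Import finmap.
From Stdlib Require Import FunctionalExtensionality.

Local Open Scope fset_scope.

Section Aux.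
Variable Sigma : finType.

Lemma subst_letter (f : Sigma -> {fset word Sigma}) (h : Sigma -> Sigma) t :
  (forall c, f c = letter_set (h c)) ->
  subst f t = [fset (x.1, h x.2) | x in t].
Proof.
move=> Hf; rewrite /subst.
rewrite (eq_bigr (fun x => [fset (x.1, h x.2)])); first by rewrite bigfcup_imfset1.
move=> x _; rewrite Hf /prefix_tree /letter_set.
apply/fsetP => y; apply/imfsetP/fset1P => [[w /fset1P -> ->]|->] /=.
  by rewrite cats0.
by exists ([::], h x.2); rewrite ?inE //= cats0.
Qed.

Lemma lmapE h t : lmap h t = [fset (x.1, h x.2) | x in t] :> {fset word Sigma}.
Proof. exact: subst_letter. Qed.

Lemma graftE a b t : graft a (letter_set b) t =
  lmap (fun c => if c == a then b else c) t :> {fset word Sigma}.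
Proof.
rewrite lmapE /graft. apply: (subst_letter _ (fun c => if c == a then b else c)) => c /=.
by case: ifP.
Qed.

Lemma lmap_comp h s t : lmap h (lmap s t) = lmap (fun c => h (s c)) t
  :> {fset word Sigma}.
Proof.
rewrite !lmapE; apply/fsetP => y; apply/imfsetP/imfsetP.
  case=> w /imfsetP [z zt E1] E2; exists z => //.
  by rewrite E2 E1.
case=> z zt E; exists (z.1, s z.2) => //.
by apply/imfsetP; exists z.
Qed.

Lemma lmap_ext h h' t : (forall c, h c = h' c) -> lmap h t = lmap h' t
  :> {fset word Sigma}.
Proof.
move=> E; rewrite !lmapE; apply/fsetP => y; apply/imfsetP/imfsetP;
by case=> z zt E'; exists z; rewrite // E' E.
Qed.

End Aux.

Theorem mainTheorem7 (Sigma : finType) (n : nat) (hn : 1 <= n)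
  (g : ('I_n -> tree Sigma) -> tree Sigma) :
  WCP g <-> GCP g.
Proof.
split.
- move=> W a i b; rewrite !graftE; apply: W => [x|j].
    case: (x =P a i) => [E|ne] /=; first by case: ifP.
    by rewrite (introF eqP ne).
  case: (j =P i) => [->|_] /=; rewrite ?eqxx //.
  by case: (b =P a i) => [E|ne] /=; rewrite ?E ?eqxx.
- move=> G h hid.
  have key : forall u : 'I_n -> Sigma,
      lmap h (val (g (fun i => letter (u i)))) =
      lmap h (val (g (fun i => letter (h (u i))))).
    move=> u.
    pose mix k := fun j : 'I_n => if j < k then h (u j) else u j.
    have step : forall k, lmap h (val (g (fun i => letter (u i)))) =
                          lmap h (val (g (fun i => letter (mix k i)))).
      elim=> [|k IH]; first by congr (lmap h (val (g _))).
      rewrite IH; case: (ltnP k n) => kn; last first.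
        congr (lmap h (val (g _))); apply: functional_extensionality => j.
        rewrite /mix ltnS (leq_eqVlt j k).
        case: (j =P k :> nat) => //= E.
        by move: (ltn_ord j); rewrite E ltnNge kn.
      pose i := Ordinal kn.
      have := G (mix k) i (h (u i)).
      rewrite !graftE => /(congr1 (lmap h)); rewrite !lmap_comp.
      have E : forall c, h (if c == mix k i then h (u i) else c) = h c.
        move=> c; case: (c =P mix k i) => [->|] //.
        by rewrite /mix /= ltnn hid.
      rewrite !(@lmap_ext _ _ h _ E) => ->.
      congr (lmap h (val (g _))); apply: functional_extensionality => j.
      rewrite /mix ltnS (leq_eqVlt j k).
      case: (j =P i) => [->|ne] /=; first by rewrite eqxx.
      have -> : (j == k :> nat) = false.
        by apply/negP => /eqP E'; apply: ne; apply: val_inj.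
      by [].
    rewrite (step n); congr (lmap h (val (g _))); apply: functional_extensionality => j.
    by rewrite /mix ltn_ord.
  move=> u v huv; rewrite key (key v).
  congr (lmap h (val (g _))); apply: functional_extensionality => j.
  by rewrite huv.
Qed.
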